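(* Let $\alpha>0$ and let $a:\mathbb{R}\to[\alpha,\infty)$ and $f:\mathbb{R}\to\mathbb{R}$ be slowly oscillating. Then the function $F(t):=\int_{-\infty}^te^{-\int_s^ta(r)\,dr}f(s)\,ds$, $t\in\mathbb{R}$, is slowly oscillating.
   Context: In this statement a function $g:\mathbb{R}\to\mathbb{R}$ is called slowly oscillating if it is bounded and continuous (hence uniformly continuous) and for every $\omega\in\mathbb{R}$, $\lim_{|t|\to+\infty}|g(t+\omega)-g(t)|=0$. *)

(* Defs.v *)
From Stdlib Require Import Reals.
From Coquelicot Require Import Coquelicot.
Open Scope R_scope.

Definition slowly_oscillating (g : R -> R) : Prop :=
  (exists M : R, forall t : R, Rabs (g t) <= M) /\
  (forall t : R, continuous g t) /\
  (forall w : R,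
     is_lim (fun t => Rabs (g (t + w) - g t)) p_infty 0 /\
     is_lim (fun t => Rabs (g (t + w) - g t)) m_infty 0).

(* Main.v *)
Require Import Defs.
From Stdlib Require Import Reals Lra.
From Coquelicot Require Import Coquelicot.
Open Scope R_scope.

Lemma exR (g : R -> R) (Hc : forall t, continuous g t) x y : ex_RInt g x y.
Proof. apply (@ex_RInt_continuous R_CompleteNormedModule); intros; apply Hc. Qed.

Lemma cont_deriv (g g' : R -> R) (H : forall t, is_derive g t (g' t)) t : continuous g t.
Proof. apply (@ex_derive_continuous R_AbsRing R_NormedModule); eexists; apply H. Qed.

Lemma is_derive_eq (g : R -> R) x l l' : is_derive g x l -> l = l' -> is_derive g x l'.
Proof. intros H ->; exact H. Qed.

Lemma A_deriv (a : R -> R) (Hc : forall t, continuous a t) t :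
  is_derive (fun t => RInt a 0 t) t (a t).
Proof. apply is_derive_RInt with 0. apply filter_forall; intros; apply RInt_correct, exR, Hc. apply Hc. Qed.

Lemma A_diff (a : R -> R) (Hc : forall t, continuous a t) s t :
  RInt a s t = RInt a 0 t - RInt a 0 s.
Proof. pose proof (RInt_Chasles a 0 s t (exR a Hc _ _) (exR a Hc _ _)) as H.
 unfold plus in H; simpl in H. lra. Qed.

Lemma A_lower (a : R -> R) (Hc : forall t, continuous a t) alpha
  (Ha : forall t, alpha <= a t) s t : s <= t -> alpha * (t - s) <= RInt a s t.
Proof.
  intros Hst. assert (E : RInt (fun _ => alpha) s t = alpha * (t - s)).
  { rewrite RInt_const. unfold scal; simpl. unfold mult; simpl. ring. }
  rewrite <- E. apply RInt_le. exact Hst. apply ex_RInt_const. apply exR, Hc. intros; apply Ha.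
Qed.

Lemma expA_deriv (a : R -> R) (Hc : forall t, continuous a t) s :
  is_derive (fun s => exp (RInt a 0 s)) s (a s * exp (RInt a 0 s)).
Proof.
  eapply is_derive_eq. apply (is_derive_comp exp (fun s => RInt a 0 s)).
  apply is_derive_exp. apply A_deriv, Hc. reflexivity.
Qed.

Lemma cont_mult (f g : R -> R) x : continuous f x -> continuous g x -> continuous (fun y => f y * g y) x.
Proof. intros; apply (@continuous_mult R_UniformSpace R_AbsRing); auto. Qed.
Lemma cont_plus (f g : R -> R) x : continuous f x -> continuous g x -> continuous (fun y => f y + g y) x.
Proof. intros; apply (@continuous_plus R_UniformSpace R_AbsRing R_NormedModule); auto. Qed.
Lemma cont_minus (f g : R -> R) x : continuous f x -> continuous g x -> continuous (fun y => f y - g y) x.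
Proof. intros; apply (@continuous_minus R_UniformSpace R_AbsRing R_NormedModule); auto. Qed.
Lemma cont_const (c x : R) : continuous (fun _ => c) x.
Proof. apply continuous_const. Qed.
Lemma cont_shift (f : R -> R) w (Hc : forall t, continuous f t) x : continuous (fun y => f (y + w)) x.
Proof. apply (continuous_comp (fun y => y + w) f). apply cont_plus. apply continuous_id. apply cont_const. apply Hc. Qed.
Lemma KB (a k : R -> R) alpha (Hal : 0 < alpha) (Hc : forall t, continuous a t)
  (Ha : forall t, alpha <= a t) (Hk : forall t, continuous k t) u v c (Huv : u <= v)
  (Hb : forall s, u <= s <= v -> Rabs (k s) <= c) :
  Rabs (RInt (fun s => exp (RInt a 0 s) * k s) u v) <=
    c / alpha * (exp (RInt a 0 v) - exp (RInt a 0 u)).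
Proof.
  set (E := fun s => exp (RInt a 0 s)).
  assert (HE : forall t, continuous E t) by (apply cont_deriv with (fun s => a s * E s); apply expA_deriv, Hc).
  assert (Hc0 : 0 <= c) by (eapply Rle_trans; [apply Rabs_pos | apply (Hb u); lra]).
  assert (Hi : is_RInt (fun s => c/alpha * (a s * E s)) u v (minus (c/alpha * E v) (c/alpha * E u))).
  { apply (@is_RInt_derive R_CompleteNormedModule (fun s => c/alpha * E s)).
    - intros x _. apply is_derive_scal. apply expA_deriv, Hc.
    - intros x _. apply cont_mult. apply cont_const. apply cont_mult. apply Hc. apply HE. }
  apply (@is_RInt_unique R_CompleteNormedModule) in Hi. unfold minus, plus, opp in Hi; simpl in Hi.
  eapply Rle_trans. apply abs_RInt_le; [lra | apply exR; intros; apply cont_mult; auto].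
  assert (HH : c / alpha * (E v - E u) = RInt (fun s => c/alpha * (a s * E s)) u v) by lra. unfold E in *. rewrite HH.
  apply RInt_le. exact Huv.
  apply exR; intros. apply (@continuous_comp R_UniformSpace R_UniformSpace R_UniformSpace _ Rabs). apply cont_mult; auto. apply continuous_Rabs.
  apply exR; intros. apply cont_mult. apply cont_const. apply cont_mult; auto.
  intros x Hx. rewrite Rabs_mult. rewrite (Rabs_pos_eq (exp (RInt a 0 x))) by (left; apply exp_pos).
  assert (0 < exp (RInt a 0 x)) by apply exp_pos. assert (Rabs (k x) <= c) by (apply Hb; lra).
  assert (c = c/alpha*alpha) by (field; lra). assert (0 <= c/alpha) by (apply Rdiv_le_0_compat; lra).
  specialize (Ha x). set (q := c/alpha) in *. set (e := exp (RInt a 0 x)) in *.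
  assert (0 <= q * e) by (apply Rmult_le_pos; lra).
  assert (e * Rabs (k x) <= e * c) by (apply Rmult_le_compat_l; lra).
  assert (q*e*alpha <= q*e*a x) by (apply Rmult_le_compat_l; lra). nra.
Qed.
Lemma gen_of_eps (h : R -> R) t l (Hex : forall x, ex_RInt h x t)
  (H : forall eps : posreal, exists X, forall x, x < X -> Rabs (RInt h x t - l) < eps) :
  is_RInt_gen h (Rbar_locally m_infty) (at_point t) l.
Proof.
  intros P [eps HP]. destruct (H eps) as [X HX].
  apply Filter_prod with (fun x => x < X) (fun y => y = t).
  - exists X; auto.
  - reflexivity.
  - intros x y Hx Hy. subst y. exists (RInt h x t). split.
    + apply (@RInt_correct R_CompleteNormedModule), Hex.
    + apply HP. apply HX, Hx.
Qed.

Lemma lim_exists (h : R -> R) (Hc : forall t, continuous h t)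
  (Hcau : forall eps : posreal, exists X, forall u v, u < X -> v < X -> Rabs (RInt h u v) < eps) :
  exists L, forall eps : posreal, exists X, forall x, x < X -> Rabs (RInt h x 0 - L) < eps.
Proof.
  destruct (proj1 (@filterlim_locally_cauchy R R_CompleteSpace (Rbar_locally m_infty) (Rbar_locally_filter _) (fun x => RInt h x 0))) as [L HL].
  - intros eps. destruct (Hcau eps) as [X HX]. exists (fun x => x < X). split.
    + exists X; auto.
    + intros u v Hu Hv. pose proof (RInt_Chasles h v u 0 (exR h Hc _ _) (exR h Hc _ _)) as HC.
      unfold plus in HC; simpl in HC. change (Rabs (RInt h v 0 - RInt h u 0) < eps).
      replace (RInt h v 0 - RInt h u 0) with (RInt h v u) by lra. apply HX; auto.
  - exists L. intros eps. destruct (proj1 (filterlim_locally _ _) HL eps) as [X HX].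
    exists X. intros x Hx. apply HX, Hx.
Qed.
Ltac rsimpl := do 3 (unfold scal, plus, opp, minus, zero, one, Hierarchy.mult; simpl).
Ltac rring := match goal with |- ?x = ?y => change (@eq R x y) end; ring.
Lemma shift_deriv (g : R -> R) w t l : is_derive g (t + w) l -> is_derive (fun t => g (t + w)) t l.
Proof.
  intros H. eapply is_derive_eq. apply (is_derive_comp g (fun t => t + w)). exact H.
  apply (@is_derive_plus R_AbsRing R_NormedModule). apply is_derive_id. apply is_derive_const.
  rsimpl. rring.
Qed.

Lemma main_est (a f F : R -> R) alpha B (Hal : 0 < alpha) (Hca : forall t, continuous a t)
  (Hcf : forall t, continuous f t) (Ha : forall t, alpha <= a t)
  (HB : forall t, Rabs (F t) <= B)
  (HF : forall t, is_derive F t (- a t * F t + f t)) w x t eps (Hxt : x <= t)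
  (Hg : forall s, x <= s <= t -> Rabs ((a s - a (s + w)) * F (s + w) + (f (s + w) - f s)) <= eps) :
  Rabs (F (t + w) - F t) <= 2 * B * exp (- alpha * (t - x)) + eps / alpha.
Proof.
  set (g := fun s => (a s - a (s + w)) * F (s + w) + (f (s + w) - f s)).
  assert (HcF : forall t, continuous F t) by (apply cont_deriv with (fun t => - a t * F t + f t); exact HF).
  assert (Hcg : forall t, continuous g t).
  { intros y. unfold g. apply cont_plus. apply cont_mult. apply cont_minus; auto. apply cont_shift; auto.
    apply cont_shift; auto. apply cont_minus. apply cont_shift; auto. auto. }
  assert (Hi : is_RInt (fun s => exp (RInt a 0 s) * g s) x t
     (minus (exp (RInt a 0 t) * (F (t + w) - F t)) (exp (RInt a 0 x) * (F (x + w) - F x)))).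
  { apply (@is_RInt_derive R_CompleteNormedModule (fun s => exp (RInt a 0 s) * (F (s + w) - F s))).
    - intros y _. eapply is_derive_eq.
      apply (@is_derive_mult R_AbsRing). apply expA_deriv, Hca.
      apply (@is_derive_minus R_AbsRing R_NormedModule). apply shift_deriv, HF. apply HF.
      intros; unfold Hierarchy.mult; simpl. rring.
      unfold g; rsimpl. rring.
    - intros y _. apply cont_mult; auto. apply cont_deriv with (fun s => a s * exp (RInt a 0 s)).
      apply expA_deriv, Hca. }
  apply (@is_RInt_unique R_CompleteNormedModule) in Hi. unfold minus, plus, opp in Hi; simpl in Hi.
  assert (HK := KB a g alpha Hal Hca Ha Hcg x t eps Hxt Hg). rewrite Hi in HK.
  assert (Hr : RInt a 0 x <= RInt a 0 t - alpha * (t - x)).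
  { pose proof (A_lower a Hca alpha Ha x t Hxt). rewrite (A_diff a Hca) in H. lra. }
  assert (Hex : exp (RInt a 0 x) <= exp (RInt a 0 t) * exp (- alpha * (t - x))).
  { rewrite <- exp_plus. destruct (Req_dec (RInt a 0 x) (RInt a 0 t + - alpha * (t - x))) as [E|E].
    rewrite E; lra. left; apply exp_increasing; lra. }
  set (Et := exp (RInt a 0 t)) in *. set (Ex := exp (RInt a 0 x)) in *.
  set (e := exp (- alpha * (t - x))) in *.
  assert (HEt : 0 < Et) by apply exp_pos. assert (HEx : 0 < Ex) by apply exp_pos.
  assert (He : 0 < e) by apply exp_pos.
  assert (HDx : Rabs (F (x + w) - F x) <= 2 * B).
  { unfold Rminus. eapply Rle_trans. apply Rabs_triang. rewrite Rabs_Ropp. pose proof (HB (x+w)); pose proof (HB x); lra. }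
  assert (H1 : Rabs (Ex * (F (x + w) - F x)) <= Et * (e * (2 * B))).
  { rewrite Rabs_mult, (Rabs_pos_eq Ex) by lra. apply Rle_trans with (Ex * (2 * B)).
    apply Rmult_le_compat_l; lra. replace (Et * (e * (2 * B))) with ((Et * e) * (2 * B)) by ring.
    apply Rmult_le_compat_r; [|lra].
    eapply Rle_trans; [apply Rabs_pos | exact HDx]. }
  assert (H2 : eps / alpha * (Et - Ex) <= Et * (eps / alpha)).
  { assert (0 <= eps). { eapply Rle_trans; [apply Rabs_pos | apply (Hg t); lra]. }
    assert (0 <= eps / alpha) by (apply Rdiv_le_0_compat; lra). nra. }
  assert (H3 : Et * Rabs (F (t + w) - F t) <= Et * (2 * B * e + eps / alpha)).
  { rewrite <- (Rabs_pos_eq Et) at 1 by lra. rewrite <- Rabs_mult.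
    pose proof (Rabs_triang (Et * (F (t + w) - F t) + - (Ex * (F (x + w) - F x))) (Ex * (F (x + w) - F x))) as T.
    replace (Et * (F (t + w) - F t) + - (Ex * (F (x + w) - F x)) + Ex * (F (x + w) - F x)) with (Et * (F (t + w) - F t)) in T by ring.
    lra. }
  apply Rmult_le_reg_l with Et; lra.
Qed.
Lemma exp_small alpha (Hal : 0 < alpha) d (Hd : 0 < d) :
  exists K, forall y, y < K -> exp (alpha * y) < d.
Proof.
  exists (ln d / alpha). intros y Hy. rewrite <- (exp_ln d Hd). apply exp_increasing.
  apply Rmult_lt_reg_r with (/ alpha). apply Rinv_0_lt_compat; lra.
  replace (alpha * y * / alpha) with y by (field; lra). exact Hy.
Qed.

Lemma osc_core (a f F : R -> R) alpha B (Hal : 0 < alpha) (Hca : forall t, continuous a t)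
  (Hcf : forall t, continuous f t) (Ha : forall t, alpha <= a t)
  (HB : forall t, Rabs (F t) <= B)
  (HF : forall t, is_derive F t (- a t * F t + f t)) w eps (Heps : 0 < eps) :
  exists d, 0 < d /\ exists K, 0 <= K /\ forall x t, t - x = K ->
    (forall s, x <= s <= t -> Rabs (a (s + w) - a s) < d /\ Rabs (f (s + w) - f s) < d) ->
    Rabs (F (t + w) - F t) < eps.
Proof.
  assert (HB0 : 0 <= B) by (eapply Rle_trans; [apply Rabs_pos | apply (HB 0)]).
  exists (eps * alpha / (2 * (B + 1))). split. apply Rdiv_lt_0_compat; nra.
  destruct (exp_small alpha Hal (eps / (4 * (B + 1)))) as [K' HK']. apply Rdiv_lt_0_compat; lra.
  exists (Rabs K' + 1). split. pose proof (Rabs_pos K'); lra.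
  intros x t Hxt Hs. pose proof (Rabs_pos K') as HK0.
  set (d := eps * alpha / (2 * (B + 1))) in *.
  assert (Hd : 0 < d) by (apply Rdiv_lt_0_compat; nra).
  assert (Hm := main_est a f F alpha B Hal Hca Hcf Ha HB HF w x t (d * B + d) ltac:(lra)).
  assert (Hm' : Rabs (F (t + w) - F t) <= 2 * B * exp (- alpha * (t - x)) + (d * B + d) / alpha).
  { apply Hm. intros s Hsx. destruct (Hs s Hsx) as [H1 H2].
    eapply Rle_trans. apply Rabs_triang. rewrite Rabs_mult. rewrite Rabs_minus_sym in H1.
    pose proof (HB (s + w)). pose proof (Rabs_pos (a s - a (s + w))). pose proof (Rabs_pos (F (s + w))).
    assert (Rabs (a s - a (s + w)) * Rabs (F (s + w)) <= d * B).
    { apply Rmult_le_compat; lra. } lra. }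
  assert (He : exp (- alpha * (t - x)) < eps / (4 * (B + 1))).
  { replace (- alpha * (t - x)) with (alpha * - (Rabs K' + 1)) by (rewrite Hxt; ring).
    apply HK'. pose proof (Rle_abs (- K')). rewrite Rabs_Ropp in H. lra. }
  assert (E1 : (d * B + d) / alpha = eps / 2) by (unfold d; field; lra).
  assert (E2 : 2 * B * exp (- alpha * (t - x)) <= 2 * B * (eps / (4 * (B + 1)))).
  { apply Rmult_le_compat_l; lra. }
  assert (E3 : 2 * B * (eps / (4 * (B + 1))) < eps / 2).
  { replace (2 * B * (eps / (4 * (B + 1)))) with (eps / 2 * (B / (B + 1))) by (field; lra).
    assert (B / (B + 1) < 1). { apply Rmult_lt_reg_r with (B + 1). lra. field_simplify; lra. }
    nra. }
  lra.
Qed.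
Theorem lemma4p2 (alpha : R) (a f : R -> R)
  (Halpha : 0 < alpha)
  (Ha_range : forall t : R, alpha <= a t)
  (Ha : slowly_oscillating a)
  (Hf : slowly_oscillating f) :
  exists F : R -> R,
    (forall t : R,
       is_RInt_gen (fun s => exp (- RInt a s t) * f s)
         (Rbar_locally m_infty) (at_point t) (F t)) /\
    slowly_oscillating F.
Proof.
  destruct Ha as [[Ma HMa] [Hca Hosa]]. destruct Hf as [[M HM] [Hcf Hosf]].
  assert (HM0 : 0 <= M) by (eapply Rle_trans; [apply Rabs_pos | apply (HM 0)]).
  set (h := fun s => exp (RInt a 0 s) * f s).
  assert (HcE : forall t, continuous (fun s => exp (RInt a 0 s)) t).
  { apply cont_deriv with (fun s => a s * exp (RInt a 0 s)); apply expA_deriv, Hca. }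
  assert (Hch : forall t, continuous h t) by (intros; unfold h; apply cont_mult; auto).
  assert (Hhb : forall u v, u <= v -> Rabs (RInt h u v) <= M / alpha * (exp (RInt a 0 v) - exp (RInt a 0 u))).
  { intros u v Huv. apply KB; auto. }
  assert (HA0 : forall v, v <= 0 -> exp (RInt a 0 v) <= exp (alpha * v)).
  { intros v Hv. pose proof (A_lower a Hca alpha Ha_range v 0 Hv) as H.
    rewrite (A_diff a Hca) in H. rewrite RInt_point in H. unfold zero in H; simpl in H.
    destruct (Req_dec (RInt a 0 v) (alpha * v)) as [E|E]. rewrite E; lra.
    left; apply exp_increasing; lra. }
  assert (HMa0 : 0 <= M / alpha) by (apply Rdiv_le_0_compat; lra).
  destruct (lim_exists h Hch) as [L HL].
  { intros eps. destruct (exp_small alpha Halpha (eps * alpha / (M + 1))) as [K HK].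
    { apply Rdiv_lt_0_compat. pose proof (cond_pos eps); nra. lra. }
    assert (Hw : forall u v, u <= v -> v < Rmin 0 K -> Rabs (RInt h u v) < eps).
    { intros u v Huv Hv. pose proof (Rmin_l 0 K). pose proof (Rmin_r 0 K).
      eapply Rle_lt_trans. apply Hhb, Huv.
      assert (Hev : exp (RInt a 0 v) < eps * alpha / (M + 1)).
      { eapply Rle_lt_trans. apply HA0; lra. apply HK; lra. }
      pose proof (exp_pos (RInt a 0 u)).
      apply Rle_lt_trans with (M / alpha * (eps * alpha / (M + 1))).
      apply Rmult_le_compat_l; lra.
      replace (M / alpha * (eps * alpha / (M + 1))) with (eps * (M / (M + 1))) by (field; lra).
      assert (M / (M + 1) < 1). { apply Rmult_lt_reg_r with (M + 1). lra. field_simplify; lra. }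
      pose proof (cond_pos eps). nra. }
    exists (Rmin 0 K). intros u v Hu Hv. destruct (Rle_dec u v) as [Huv|Huv].
    - apply Hw; auto.
    - rewrite <- (opp_RInt_swap h v u (exR h Hch _ _)). unfold opp; simpl. rewrite Rabs_Ropp. apply Hw; auto. lra. }
  set (G := fun t => L + RInt h 0 t).
  assert (HG : forall t (eps : posreal), exists X, forall x, x < X -> Rabs (RInt h x t - G t) < eps).
  { intros t eps. destruct (HL eps) as [X HX]. exists X. intros x Hx.
    pose proof (RInt_Chasles h x 0 t (exR h Hch _ _) (exR h Hch _ _)) as HC.
    unfold plus in HC; simpl in HC. unfold G. replace (RInt h x t - (L + RInt h 0 t)) with (RInt h x 0 - L) by lra.
    apply HX, Hx. }
  assert (Hgen : forall t, is_RInt_gen h (Rbar_locally m_infty) (at_point t) (G t)).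
  { intros t. apply gen_of_eps. intros; apply exR, Hch. apply HG. }
  assert (HGb : forall t, Rabs (G t) <= M / alpha * exp (RInt a 0 t)).
  { intros t. apply Rle_plus_epsilon. intros eps Heps. destruct (HG t (mkposreal eps Heps)) as [X HX].
    simpl in HX. set (x := Rmin (X - 1) t). pose proof (Rmin_l (X - 1) t). pose proof (Rmin_r (X - 1) t).
    assert (H1 := HX x ltac:(unfold x; lra)). assert (H2 := Hhb x t ltac:(unfold x; lra)).
    pose proof (exp_pos (RInt a 0 x)).
    assert (H4 : M / alpha * (exp (RInt a 0 t) - exp (RInt a 0 x)) <= M / alpha * exp (RInt a 0 t)).
    { apply Rmult_le_compat_l; lra. }
    pose proof (Rabs_triang_inv (G t) (RInt h x t)). rewrite Rabs_minus_sym in H1. lra. }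
  set (F := fun t => exp (- RInt a 0 t) * G t).
  exists F. split.
  - intros t. assert (H := is_RInt_gen_scal (Fa := Rbar_locally m_infty) (Fb := at_point t) h (exp (- RInt a 0 t)) _ (Hgen t)).
    eapply is_RInt_gen_ext; [ | exact H].
    apply filter_forall. intros [u v] x _. rsimpl. unfold h.
    rewrite (A_diff a Hca x t). rewrite !exp_Ropp.
    unfold Rminus. rewrite exp_plus, exp_Ropp.
    pose proof (exp_pos (RInt a 0 t)). pose proof (exp_pos (RInt a 0 x)).
    match goal with |- ?x = ?y => change (@eq R x y) end. field. lra.
  - assert (HFb : forall t, Rabs (F t) <= M / alpha).
    { intros t. unfold F. rewrite Rabs_mult, Rabs_pos_eq by (left; apply exp_pos).
      pose proof (HGb t). pose proof (exp_pos (- RInt a 0 t)).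
      apply Rle_trans with (exp (- RInt a 0 t) * (M / alpha * exp (RInt a 0 t))).
      apply Rmult_le_compat_l; lra. rewrite exp_Ropp. pose proof (exp_pos (RInt a 0 t)).
      right. field. lra. }
    assert (HGd : forall t, is_derive G t (h t)).
    { intros t. eapply is_derive_eq. apply (@is_derive_plus R_AbsRing R_NormedModule (fun _ => L) (fun t => RInt h 0 t)).
      apply is_derive_const. apply is_derive_RInt with 0. apply filter_forall; intros; apply (@RInt_correct R_CompleteNormedModule), exR, Hch. apply Hch.
      rsimpl. rring. }
    assert (HFd : forall t, is_derive F t (- a t * F t + f t)).
    { intros t. eapply is_derive_eq. apply (@is_derive_mult R_AbsRing (fun t => exp (- RInt a 0 t)) G).
      apply (is_derive_comp exp (fun t => - RInt a 0 t)). apply is_derive_exp.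
      apply (@is_derive_opp R_AbsRing R_NormedModule (fun t => RInt a 0 t)). apply A_deriv, Hca.
      apply HGd. intros; rsimpl; rring.
      rsimpl. unfold F, h. rewrite exp_Ropp. pose proof (exp_pos (RInt a 0 t)).
      match goal with |- ?x = ?y => change (@eq R x y) end. field. lra. }
    split; [exists (M / alpha); exact HFb | split].
    + intros t. apply cont_deriv with (fun t => - a t * F t + f t). exact HFd.
    + intros w.
      destruct (Hosa w) as [Hap Ham]. destruct (Hosf w) as [Hfp Hfm].
      apply is_lim_spec in Hap, Ham, Hfp, Hfm. simpl in Hap, Ham, Hfp, Hfm.
      split; apply is_lim_spec; intros eps; simpl;
      destruct (osc_core a f F alpha (M / alpha) Halpha Hca Hcf Ha_range HFb HFd w eps (cond_pos eps))
        as [d [Hd [K [HK HC]]]].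
      * destruct (Hap (mkposreal d Hd)) as [T1 H1]. destruct (Hfp (mkposreal d Hd)) as [T2 H2].
        exists (Rmax T1 T2 + K). intros t Ht. rewrite Rminus_0_r, Rabs_Rabsolu.
        pose proof (Rmax_l T1 T2). pose proof (Rmax_r T1 T2).
        apply (HC (t - K) t). ring. intros s Hs.
        specialize (H1 s ltac:(lra)). specialize (H2 s ltac:(lra)). simpl in H1, H2.
        rewrite Rminus_0_r, Rabs_Rabsolu in H1, H2. auto.
      * destruct (Ham (mkposreal d Hd)) as [T1 H1]. destruct (Hfm (mkposreal d Hd)) as [T2 H2].
        exists (Rmin T1 T2). intros t Ht. rewrite Rminus_0_r, Rabs_Rabsolu.
        pose proof (Rmin_l T1 T2). pose proof (Rmin_r T1 T2).
        apply (HC (t - K) t). ring. intros s Hs.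
        specialize (H1 s ltac:(lra)). specialize (H2 s ltac:(lra)). simpl in H1, H2.
        rewrite Rminus_0_r, Rabs_Rabsolu in H1, H2. auto.
Qed.
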